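(* Let $(\mathcal{V},g)$ be a finite-dimensional real scalar product space, let $J_1,\dots,J_m$ be skew-adjoint endomorphisms of $\mathcal{V}$ satisfying $J_iJ_j+J_jJ_i=2c_i\delta_{ij}\,\mathrm{id}$ for all $1\le i,j\le m$, where $c_1,\dots,c_m\in\mathbb{R}$ and at most one of the $c_i$ equals $0$, and let $\mu_0,\dots,\mu_m\in\mathbb{R}$. Then $R=\mu_0R^0+\sum_{i=1}^m\mu_iR^{J_i}$ is Jacobi-dual.
   Context: A scalar product space is a finite-dimensional real vector space with a nondegenerate symmetric bilinear form $g$; $\varepsilon_X=g(X,X)$, and $X$ is nonnull if $\varepsilon_X\neq 0$. $R^0(X,Y,Z,W)=g(Y,Z)g(X,W)-g(X,Z)g(Y,W)$; for skew-adjoint $J$, $R^J(X,Y,Z,W)=g(JX,Z)g(JY,W)-g(JY,Z)g(JX,W)+2g(JX,Y)g(JZ,W)$. The Jacobi operator of an algebraic curvature tensor $R$ is $\mathcal{J}_X(Y)=\sum_{i=1}^n\varepsilon_{E_i}R(Y,X,X,E_i)E_i$ for an orthonormal basis $(E_i)$. An eigenvector of $\mathcal{J}_X$ is a nonzero $Y$ with $\mathcal{J}_X(Y)=\lambda Y$ for some $\lambda\in\mathbb{R}$. $R$ is Jacobi-dual if for all $X,Y\in\mathcal{V}$ with $X$ nonnull: whenever $Y$ is an eigenvector of $\mathcal{J}_X$, then $X$ is an eigenvector of $\mathcal{J}_Y$. *)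

(* Defs.v *)
From HB Require Import structures.
From mathcomp Require Import all_boot all_order all_algebra.
Set Implicit Arguments. Unset Strict Implicit. Unset Printing Implicit Defensive.
Import Order.TTheory GRing.Theory Num.Theory.
Local Open Scope ring_scope.

(* The scalar product space (V, g) is modelled as V = 'rV[R]_n with
   g(x, y) = x G y^T for a symmetric invertible Gram matrix G.
   Endomorphisms are matrices acting on row vectors on the right. *)

Definition sp {R : realFieldType} {n : nat} (G : 'M[R]_n) (x y : 'rV[R]_n) : R :=
  (x *m G *m y^T) 0 0.

Definition app {R : realFieldType} {n : nat} (A : 'M[R]_n) (x : 'rV[R]_n) : 'rV[R]_n :=
  x *m A.

Definition skew_adjoint {R : realFieldType} {n : nat} (G : 'M[R]_n) (J : 'M[R]_n) : Prop :=
  forall x y, sp G (app J x) y = - sp G x (app J y).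

Definition R0 {R : realFieldType} {n : nat} (G : 'M[R]_n) (X Y Z W : 'rV[R]_n) : R :=
  sp G Y Z * sp G X W - sp G X Z * sp G Y W.

Definition RJ {R : realFieldType} {n : nat} (G : 'M[R]_n) (J : 'M[R]_n)
  (X Y Z W : 'rV[R]_n) : R :=
  sp G (app J X) Z * sp G (app J Y) W - sp G (app J Y) Z * sp G (app J X) W
  + 2 * sp G (app J X) Y * sp G (app J Z) W.

(* Jacobi operator J_X(Y): the unique vector with g(J_X(Y), Z) = R(Y,X,X,Z)
   for all Z, i.e. the index-raising of the covector Z |-> R(Y,X,X,Z).
   For an orthonormal basis (E_i) this is sum_i eps_{E_i} R(Y,X,X,E_i) E_i. *)
Definition jacobi {R : realFieldType} {n : nat} (G : 'M[R]_n)
  (Rt : 'rV[R]_n -> 'rV[R]_n -> 'rV[R]_n -> 'rV[R]_n -> R)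
  (X Y : 'rV[R]_n) : 'rV[R]_n :=
  (\row_k Rt Y X X (delta_mx 0 k)) *m invmx G.

Definition eigenvector {R : realFieldType} {n : nat} (A : 'rV[R]_n -> 'rV[R]_n)
  (Y : 'rV[R]_n) : Prop :=
  Y != 0 /\ exists lambda : R, A Y = lambda *: Y.

Definition jacobi_dual {R : realFieldType} {n : nat} (G : 'M[R]_n)
  (Rt : 'rV[R]_n -> 'rV[R]_n -> 'rV[R]_n -> 'rV[R]_n -> R) : Prop :=
  forall X Y : 'rV[R]_n, sp G X X != 0 ->
    eigenvector (jacobi G Rt X) Y -> eigenvector (jacobi G Rt Y) X.

(* Main.v *)
Require Import Defs.
From HB Require Import structures.
From mathcomp Require Import all_boot all_order all_algebra.
From mathcomp Require Import ring lra.
Import Order.TTheory GRing.Theory Num.Theory.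
Set Implicit Arguments. Unset Strict Implicit.
Local Open Scope ring_scope.

Lemma spDl (R : realFieldType) n (G : 'M[R]_n) x y z :
  sp G (x + y) z = sp G x z + sp G y z.
Proof. by rewrite /sp !mulmxDl mxE. Qed.
Lemma spZl (R : realFieldType) n (G : 'M[R]_n) a x z :
  sp G (a *: x) z = a * sp G x z.
Proof. by rewrite /sp -!scalemxAl mxE. Qed.
Lemma sp0l (R : realFieldType) n (G : 'M[R]_n) z : sp G 0 z = 0.
Proof. by rewrite /sp !mul0mx mxE. Qed.
Lemma spNl (R : realFieldType) n (G : 'M[R]_n) x z : sp G (- x) z = - sp G x z.
Proof. by rewrite -scaleN1r spZl mulN1r. Qed.
Lemma spBl (R : realFieldType) n (G : 'M[R]_n) x y z :
  sp G (x - y) z = sp G x z - sp G y z.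
Proof. by rewrite spDl spNl. Qed.
Lemma sp_suml (R : realFieldType) n (G : 'M[R]_n) (I : finType) (F : I -> 'rV[R]_n) z :
  sp G (\sum_i F i) z = \sum_i sp G (F i) z.
Proof. by rewrite /sp !mulmx_suml summxE. Qed.
Lemma sp_sym (R : realFieldType) n (G : 'M[R]_n) (G_sym : G^T = G) x y :
  sp G x y = sp G y x.
Proof.
rewrite /sp; have <- : (x *m G *m y^T)^T = y *m G *m x^T.
  by rewrite !trmx_mul trmxK G_sym mulmxA.
by rewrite [RHS]mxE.
Qed.
Lemma spZr (R : realFieldType) n (G : 'M[R]_n) (G_sym : G^T = G) a x z :
  sp G x (a *: z) = a * sp G x z.
Proof. by rewrite sp_sym // spZl sp_sym. Qed.
Lemma sp0r (R : realFieldType) n (G : 'M[R]_n) (G_sym : G^T = G) z : sp G z 0 = 0.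
Proof. by rewrite sp_sym // sp0l. Qed.
Lemma spDr (R : realFieldType) n (G : 'M[R]_n) (G_sym : G^T = G) x y z :
  sp G z (x + y) = sp G z x + sp G z y.
Proof. by rewrite !(sp_sym G_sym z) spDl. Qed.

Lemma appD (R : realFieldType) n (A : 'M[R]_n) x y : app A (x + y) = app A x + app A y.
Proof. by rewrite /app mulmxDl. Qed.
Lemma appZ (R : realFieldType) n (A : 'M[R]_n) a x : app A (a *: x) = a *: app A x.
Proof. by rewrite /app scalemxAl. Qed.
Lemma app0 (R : realFieldType) n (A : 'M[R]_n) : app A 0 = 0.
Proof. by rewrite /app mul0mx. Qed.
Lemma app_sum (R : realFieldType) n (A : 'M[R]_n) (I : finType) (F : I -> 'rV[R]_n) :
  app A (\sum_i F i) = \sum_i app A (F i).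
Proof. by rewrite /app mulmx_suml. Qed.

Lemma sp_JXX (R : realFieldType) n (G : 'M[R]_n) (G_sym : G^T = G) J
  (sk : skew_adjoint G J) x : sp G (app J x) x = 0.
Proof. have := sk x x; rewrite [sp G x _]sp_sym //; lra. Qed.
Lemma sp_Jswap (R : realFieldType) n (G : 'M[R]_n) (G_sym : G^T = G) J
  (sk : skew_adjoint G J) x y : sp G (app J x) y = - sp G (app J y) x.
Proof. by rewrite sk [sp G x _]sp_sym. Qed.

Lemma jacobi_char (R : realFieldType) n (G : 'M[R]_n) (Gu : G \in unitmx) Rt X Y v :
  (forall k, Rt Y X X (delta_mx 0 k) = sp G v (delta_mx 0 k)) -> jacobi G Rt X Y = v.
Proof.
move=> H; rewrite /jacobi.
have -> : \row_k Rt Y X X (delta_mx 0 k) = v *m G.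
  apply/rowP=> k; rewrite mxE H /sp trmx_delta -colE.
  by rewrite [LHS]mxE.
by rewrite mulmxK.
Qed.

Lemma sym_sum (R : realFieldType) (V : lmodType R) m (F : 'I_m -> 'I_m -> V) (D : 'I_m -> V) :
  (forall i k, F i k + F k i = if i == k then D i + D i else 0) ->
  \sum_i \sum_k F i k = \sum_i D i.
Proof.
move=> H.
have E : (\sum_i \sum_k F i k) + (\sum_i \sum_k F i k) = (\sum_i D i) + (\sum_i D i).
  rewrite [X in _ + X]exchange_big -big_split /= -big_split /=.
  apply: eq_bigr => i _; rewrite -big_split /= (bigD1 i) //= big1.
    by rewrite H eqxx addr0.
  by move=> k /negPf ki; rewrite H eq_sym ki.
have h2 : (2 : R) != 0 by rewrite pnatr_eq0.
apply: (scalerI h2); by rewrite !scaler_nat !mulr2n.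
Qed.

Lemma jacobi_formula (R : realFieldType) (n m : nat) (G : 'M[R]_n)
  (G_sym : G^T = G) (G_nondeg : G \in unitmx)
  (J : 'I_m -> 'M[R]_n) (J_skew : forall i, skew_adjoint G (J i))
  (mu0 : R) (mu : 'I_m -> R) X Y :
  jacobi G (fun X Y Z W =>
    mu0 * R0 G X Y Z W + \sum_(i < m) mu i * RJ G (J i) X Y Z W) X Y =
  mu0 *: (sp G X X *: Y - sp G Y X *: X)
  + \sum_i (3 * mu i * sp G (app (J i) Y) X) *: app (J i) X.
Proof.
apply: jacobi_char => // k.
rewrite spDl spZl spBl !spZl sp_suml; congr (_ + _).
apply: eq_bigr => i _; rewrite /RJ spZl sp_JXX //; ring.
Qed.

Lemma BB (R : realFieldType) (n m : nat) (J : 'I_m -> 'M[R]_n) (c : 'I_m -> R)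
  (J_cliff : forall (i j : 'I_m) (x : 'rV[R]_n),
      app (J i) (app (J j) x) + app (J j) (app (J i) x)
      = (if i == j then 2 * c i else 0) *: x) (b : 'I_m -> R) X :
  \sum_i b i *: app (J i) (\sum_k b k *: app (J k) X)
  = (\sum_i b i ^+ 2 * c i) *: X.
Proof.
rewrite scaler_suml.
transitivity (\sum_i \sum_k (b i * b k) *: app (J i) (app (J k) X)).
  apply: eq_bigr => i _; rewrite app_sum scaler_sumr; apply: eq_bigr => k _.
  by rewrite appZ scalerA.
apply: sym_sum => i k.
rewrite [b k * b i]mulrC -scalerDr J_cliff scalerA.
case: eqP => [->|_]; last by rewrite mulr0 scale0r.
by rewrite -scalerDl; congr (_ *: _); ring.
Qed.

Lemma gramJ (R : realFieldType) (n m : nat) (G : 'M[R]_n)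
  (G_sym : G^T = G) (J : 'I_m -> 'M[R]_n) (c : 'I_m -> R)
  (J_skew : forall i, skew_adjoint G (J i))
  (J_cliff : forall (i j : 'I_m) (x : 'rV[R]_n),
      app (J i) (app (J j) x) + app (J j) (app (J i) x)
      = (if i == j then 2 * c i else 0) *: x) i j X :
  sp G (app (J i) X) (app (J j) X) = - ((if i == j then c i else 0) * sp G X X).
Proof.
have h1 := J_skew i X (app (J j) X).
have h2 := J_skew j X (app (J i) X).
rewrite [sp G (app (J j) X) _]sp_sym // in h2.
have h3 : sp G X (app (J i) (app (J j) X)) + sp G X (app (J j) (app (J i) X))
   = (if i == j then 2 * c i else 0) * sp G X X.
  by rewrite -spDr // J_cliff spZr.
case: eqP h3 => _ h3; lra.
Qed.
Unset Implicit Arguments.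

Theorem mainTheorem2 (R : realFieldType) (n m : nat) (G : 'M[R]_n)
  (G_sym : G^T = G) (G_nondeg : G \in unitmx)
  (J : 'I_m -> 'M[R]_n) (c : 'I_m -> R)
  (J_skew : forall i, skew_adjoint G (J i))
  (J_cliff : forall (i j : 'I_m) (x : 'rV[R]_n),
      app (J i) (app (J j) x) + app (J j) (app (J i) x)
      = (if i == j then 2 * c i else 0) *: x)
  (c_atmost1 : forall i j : 'I_m, c i = 0 -> c j = 0 -> i = j)
  (mu0 : R) (mu : 'I_m -> R) :
  jacobi_dual G (fun X Y Z W =>
    mu0 * R0 G X Y Z W + \sum_(i < m) mu i * RJ G (J i) X Y Z W).
Proof.
move=> X Y nX [Y0 [lam HY]]; split.
  by apply: contra nX => /eqP ->; rewrite sp0l.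
rewrite !jacobi_formula // in HY *.
set b := fun i => 3 * mu i * sp G (app (J i) Y) X.
have Hb : forall i, 3 * mu i * sp G (app (J i) X) Y = - b i.
  by move=> i; rewrite /b sp_Jswap //; ring.
under eq_bigr do rewrite Hb.
rewrite [sp G X Y]sp_sym //.
set s := sp G Y X.
set S := \sum_i b i *: app (J i) X.
set SY := \sum_i - b i *: app (J i) Y.
have hSY : SY = - \sum_i b i *: app (J i) Y.
  by rewrite /SY -sumrN; apply: eq_bigr => i _; rewrite scaleNr.
set k := lam - mu0 * sp G X X.
have E : k *: Y = - (mu0 * s) *: X + S.
  have HY' : mu0 *: (sp G X X *: Y - s *: X) + S = lam *: Y by rewrite /S /b.
  apply/rowP => j; have := congr1 (fun v : 'rV[R]_n => v 0 j) HY'; rewrite /= !mxE => h.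
  transitivity (lam * Y 0 j - mu0 * sp G X X * Y 0 j); first by rewrite /k; ring.
  rewrite -h; ring.
case: (eqVneq k 0) => Hk.
  have E0 : S = (mu0 * s) *: X.
    by apply/eqP; rewrite -subr_eq0 -scaleNr addrC -E Hk scale0r.
  have ms0 : mu0 * s = 0.
    have := congr1 (fun v : 'rV[R]_n => sp G v X) E0; rewrite /= spZl /S sp_suml big1.
      by move/esym/eqP; rewrite mulf_eq0 (negPf nX) orbF => /eqP.
    by move=> i _; rewrite spZl sp_JXX // mulr0.
  rewrite ms0 scale0r in E0.
  have bc : forall j, b j * c j = 0.
    move=> j; have := congr1 (fun v : 'rV[R]_n => sp G v (app (J j) X)) E0.
    rewrite /= sp0l /S sp_suml (bigD1 j) //= big1.
      rewrite spZl (gramJ G_sym J_skew J_cliff) eqxx addr0 => /esym/eqP.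
      by rewrite eq_sym mulrN oppr_eq0 mulrA mulf_eq0 (negPf nX) orbF => /eqP.
    by move=> i /negPf ij; rewrite spZl (gramJ G_sym J_skew J_cliff) ij mul0r oppr0 mulr0.
  have b0 : forall j, b j = 0.
    move=> j; case: (eqVneq (c j) 0) => cj; last first.
      by have /eqP := bc j; rewrite mulf_eq0 (negPf cj) orbF => /eqP.
    have oth : forall i, i != j -> b i = 0.
      move=> i ij; case: (eqVneq (c i) 0) => ci.
        by move: ij; rewrite (c_atmost1 _ _ ci cj) eqxx.
      by have /eqP := bc i; rewrite mulf_eq0 (negPf ci) orbF => /eqP.
    move: E0; rewrite /S (bigD1 j) //= big1; last first.
      by move=> i /oth ->; rewrite scale0r.
    rewrite addr0 => /eqP; rewrite scaler_eq0 => /orP [/eqP //|/eqP JX0].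
    by rewrite /b -[sp G _ X]opprK -sp_Jswap // JX0 sp0l oppr0 mulr0.
  exists (mu0 * sp G Y Y).
  have -> : SY = 0 by apply: big1 => i _; rewrite b0 oppr0 scale0r.
  apply/rowP => j; rewrite !mxE.
  have -> : mu0 * (sp G Y Y * X 0 j - s * Y 0 j) = mu0 * sp G Y Y * X 0 j - (mu0 * s) * Y 0 j by ring.
  by rewrite ms0; ring.
have F : k *: SY = (mu0 * s) *: S - (\sum_i b i ^+ 2 * c i) *: X.
  rewrite hSY scalerN scaler_sumr.
  have -> : \sum_i k *: (b i *: app (J i) Y) = \sum_i b i *: app (J i) (k *: Y).
    by apply: eq_bigr => i _; rewrite appZ !scalerA mulrC.
  rewrite E.
  have -> : \sum_i b i *: app (J i) (- (mu0 * s) *: X + S)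
     = - (mu0 * s) *: S + \sum_i b i *: app (J i) S.
    rewrite /S scaler_sumr -big_split /=; apply: eq_bigr => i _.
    by rewrite appD appZ scalerDr !scalerA mulrC.
  by rewrite (BB J_cliff) opprD scaleNr opprK.
set C := \sum_i b i ^+ 2 * c i in F.
exists ((k * mu0 * sp G Y Y + (mu0 * s) ^+ 2 - C) / k).
apply: (scalerI Hk); rewrite scalerA mulrC divfK //.
apply/rowP => j.
have E' := congr1 (fun v : 'rV[R]_n => v 0 j) E.
have F' := congr1 (fun v : 'rV[R]_n => v 0 j) F.
rewrite /= !mxE in E' F' *.
have -> : k * (mu0 * (sp G Y Y * X 0 j - s * Y 0 j) + SY 0 j)
  = k * mu0 * sp G Y Y * X 0 j - mu0 * s * (k * Y 0 j) + k * SY 0 j by ring.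
rewrite E' F'; ring.
Qed.
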